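(* Let $G=(V,E)$ be a finite graph (parallel edges and loops allowed), $e\neq f$ edges of $G$, and $E^{ef}=E\setminus\{e,f\}$. For each paracel $\gamma\subseteq E^{ef}$ there is exactly one choice of a subset $\beta\subseteq E^{ef}$ disjoint from $\gamma$ and a monomial $\mathbf{m}\in B_{\beta,\gamma}$ such that $\mathbf{x}^{\beta}\mathbf{x}^{\gamma}\mathbf{m}=\prod_{g\in E^{ef}}x_g$.
   Context: For $F\subseteq E$, $\mathbf{x}^F=\prod_{g\in F}x_g$ and $k(F)$ is the number of connected components of the spanning subgraph $(V,F)$. A subset $F\subseteq E^{ef}$ is a paracel if $e$ and $f$ both join the same two distinct connected components of $(V,F)$; equivalently $(V,F+e)$ and $(V,F+f)$ have the same connected components and $k(F+e)=k(F+f)=k(F)-1$. For a paracel $F$, an edge of $E^{ef}\setminus F$ is a smoot for $F$ if it joins the same two components of $(V,F)$ as $e$ and $f$. For disjoint $\beta,\gamma\subseteq E^{ef}$, a subset $\alpha\subseteq E^{ef}$ is compatible with $\beta,\gamma$ if $\alpha$ is disjoint from $\beta$ and $\gamma$, $\gamma\cup\alpha$ is a paracel, and every edge of $\beta$ is a smoot for $\gamma\cup\alpha$; $A_{\beta,\gamma}$ is the set of compatible $\alpha$. Elements $\alpha,\alpha'\in A_{\beta,\gamma}$ (possibly equal) are twins if $\alpha\cap\alpha'\in A_{\beta,\gamma}$, and $B_{\beta,\gamma}$ is the set of distinct monomials $\mathbf{x}^{\alpha}\mathbf{x}^{\alpha'}$ with $\alpha,\alpha'$ twins in $A_{\beta,\gamma}$.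 *)

(* Defs.v *)
From mathcomp Require Import all_boot.
Set Implicit Arguments. Unset Strict Implicit. Unset Printing Implicit Defensive.

(* A finite multigraph G = (V, E): V, E finite types, [ends g] = the two
   endpoints of edge g (loops: both equal; parallel edges: same ends). *)
Section Paracel.
Variables (V E : finType) (ends : E -> V * V).

Definition adj (F : {set E}) : rel V :=
  fun u v => [exists g in F, (ends g == (u, v)) || (ends g == (v, u))].

Definition samecomp (F : {set E}) (u v : V) : bool := connect (adj F) u v.

Definition joins_same (F : {set E}) (g h : E) : bool :=
  (samecomp F (ends g).1 (ends h).1 && samecomp F (ends g).2 (ends h).2) ||
  (samecomp F (ends g).1 (ends h).2 && samecomp F (ends g).2 (ends h).1).

Variables e f : E.

Definition Eef : {set E} := [set g | (g != e) && (g != f)].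

Definition paracel (F : {set E}) : bool :=
  [&& F \subset Eef, ~~ samecomp F (ends e).1 (ends e).2 & joins_same F f e].

Definition smoot (F : {set E}) (g : E) : bool :=
  [&& g \in Eef, g \notin F & joins_same F g e].

Definition compatible (beta gamma alpha : {set E}) : bool :=
  [&& alpha \subset Eef, [disjoint alpha & beta], [disjoint alpha & gamma],
      paracel (gamma :|: alpha) & [forall g in beta, smoot (gamma :|: alpha) g]].

(* monomials in the variables x_g (g in E) are represented by their exponent
   vectors; x^F is the indicator of F *)
Definition xmon (F : {set E}) : {ffun E -> nat} := [ffun g => (g \in F : nat)].
Definition mmul (m1 m2 : {ffun E -> nat}) : {ffun E -> nat} :=
  [ffun g => m1 g + m2 g].

Definition twins (beta gamma alpha alpha' : {set E}) : Prop :=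
  [/\ compatible beta gamma alpha, compatible beta gamma alpha'
    & compatible beta gamma (alpha :&: alpha')].

Definition inB (beta gamma : {set E}) (m : {ffun E -> nat}) : Prop :=
  exists alpha alpha', twins beta gamma alpha alpha' /\
                       m = mmul (xmon alpha) (xmon alpha').
End Paracel.

(* Main.v *)
Require Import Defs.
From mathcomp Require Import all_boot.

Section Aux.
Variables (V E : finType) (ends : E -> V * V).
Set Implicit Arguments. Unset Strict Implicit.

Lemma adj_sym (F : {set E}) : symmetric (adj ends F).
Proof.
move=> u v; apply/existsP/existsP => -[g /andP[gF h]]; exists g;
  by rewrite gF orbC.
Qed.

Lemma sc_sym (F : {set E}) u v : samecomp ends F u v = samecomp ends F v u.
Proof. exact: (sym_connect_sym (adj_sym F)). Qed.

Lemma sc_trans (F : {set E}) u v w :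
  samecomp ends F u v -> samecomp ends F v w -> samecomp ends F u w.
Proof. exact: connect_trans. Qed.

Lemma sc_refl (F : {set E}) u : samecomp ends F u u.
Proof. exact: connect0. Qed.

Lemma sc_edge (F : {set E}) g : g \in F -> samecomp ends F (ends g).1 (ends g).2.
Proof.
move=> gF; apply: connect1; apply/existsP; exists g.
by rewrite gF -surjective_pairing eqxx.
Qed.

Lemma sc_mono (F F' : {set E}) u v : F \subset F' ->
  samecomp ends F u v -> samecomp ends F' u v.
Proof.
move=> sFF'; apply: connect_sub => x y /existsP[g /andP[gF h]].
apply: connect1; apply/existsP; exists g; by rewrite (subsetP sFF' _ gF) h.
Qed.

Lemma js_mono (F F' : {set E}) g h : F \subset F' ->
  joins_same ends F g h -> joins_same ends F' g h.
Proof.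
move=> s; rewrite /joins_same => /orP[/andP[a b]|/andP[a b]]; apply/orP;
  [left|right]; apply/andP; split; exact: sc_mono s _.
Qed.

Lemma adjP (F : {set E}) u w : adj ends F u w ->
  exists2 g, g \in F & (ends g = (u, w) \/ ends g = (w, u)).
Proof.
move=> /existsP[g /andP[gF /orP[/eqP h|/eqP h]]]; exists g => //; tauto.
Qed.

Lemma connect_inv (F : {set E}) (P : pred V) x y :
  samecomp ends F x y -> P x ->
  (forall u w, P u -> adj ends F u w -> P w) -> P y.
Proof.
move/connectP=> [p]; elim: p x => [|z p IH] x /=; first by move=> _ -> .
move=> /andP[rxz pz] ly Px H; exact: IH pz ly (H _ _ Px rxz) H.
Qed.

Lemma joins_edge (e : E) (F : {set E}) g : g \in F -> joins_same ends F g e ->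
  samecomp ends F (ends e).1 (ends e).2.
Proof.
move=> gF /orP[/andP[a b]|/andP[a b]]; have ed := sc_edge gF.
- rewrite sc_sym in a; exact: sc_trans (sc_trans a ed) b.
- rewrite sc_sym in b; rewrite sc_sym in ed; exact: sc_trans (sc_trans b ed) a.
Qed.

End Aux.
Unset Implicit Arguments. Set Strict Implicit.
Arguments sc_edge [V E] ends [F g].
Arguments sc_mono [V E ends] [F F' u v].
Arguments js_mono [V E ends] [F F' g h].
Arguments joins_edge [V E ends] [e F g].
Arguments connect_inv [V E ends F] P [x y].


Theorem proposition4p4 (V E : finType) (ends : E -> V * V) (e f : E)
  (hef : e != f) (gamma : {set E}) (hgamma : paracel ends e f gamma) :
  exists! p : {set E} * {ffun E -> nat},
    [/\ p.1 \subset Eef e f, [disjoint p.1 & gamma],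
        inB ends e f p.1 gamma p.2
      & mmul (mmul (xmon p.1) (xmon gamma)) p.2 = xmon (Eef e f)].
Proof.
case/and3P: hgamma => gE ne12 jfe.
set S := [set g | smoot ends e f gamma g].
set R := [set g in Eef e f | (g \notin gamma) && (g \notin S)].
set inBB := fun v => samecomp ends gamma (ends e).2 v.
set F0 := gamma :|: [set g in R | ~~ inBB (ends g).1 && ~~ inBB (ends g).2].
set X := fun v => samecomp ends F0 (ends e).1 v.
set al := [set g in R | X (ends g).1 && X (ends g).2].
set al' := [set g in R | ~~ (X (ends g).1 && X (ends g).2)].
have compat : forall a : {set E}, a \subset R ->
    ~~ samecomp ends (gamma :|: a) (ends e).1 (ends e).2 ->
    compatible ends e f S gamma a.
  move=> a aR nc; apply/and5P; split.
  - apply/subsetP=> g /(subsetP aR); rewrite inE; by case/andP.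
  - rewrite disjoint_subset; apply/subsetP=> g /(subsetP aR).
    by rewrite !inE => /and3P[_ _].
  - rewrite disjoint_subset; apply/subsetP=> g /(subsetP aR).
    by rewrite !inE => /and3P[_].
  - apply/and3P; split => //; last by apply: js_mono jfe; apply: subsetUl.
    rewrite subUset gE /=; apply/subsetP=> g /(subsetP aR).
    by rewrite inE => /andP[].
  - apply/forall_inP=> g; rewrite inE => /and3P[gE' gng js].
    apply/and3P; split => //; last by apply: js_mono js; apply: subsetUl.
    rewrite inE negb_or gng /=; apply/negP => /(subsetP aR).
    by rewrite inE gE' gng /= inE /smoot gE' gng js.
have gF0 : gamma \subset F0 by apply: subsetUl.
have XnB : forall v, X v -> ~~ inBB v.
  move=> v Xv; apply: (connect_inv (fun v => ~~ inBB v) Xv).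
    by rewrite /inBB sc_sym.
  move=> u w nBu /adjP[g]; rewrite inE => /orP[gg|].
    move=> eg; apply/negP => Bw; move/negP: nBu; apply.
    apply: sc_trans Bw _; have := sc_edge ends gg.
    by case: eg => -> //=; rewrite sc_sym.
  rewrite inE => /andP[_ /andP[h1 h2]].
  by case=> eg; move: h1 h2; rewrite eg /= => ? ?.
have XF0 : forall u w, X u -> adj ends F0 u w -> X w.
  move=> u w Xu a; apply: connect_trans Xu (connect1 a).
have Xg : forall v, samecomp ends gamma (ends e).1 v -> X v.
  by move=> v; apply: sc_mono.
have red : ~~ samecomp ends (gamma :|: al) (ends e).1 (ends e).2.
  apply/negP => c.
  have : X (ends e).2.
    apply: (connect_inv X c); first exact: sc_refl.
    move=> u w Xu /adjP[g]; rewrite inE => /orP[gg|].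
      move=> eg; apply: (XF0 u) => //; apply/existsP; exists g.
      rewrite (subsetP gF0 _ gg); by case: eg => ->; rewrite eqxx ?orbT.
    rewrite inE => /andP[_ /andP[h1 h2]].
    by case=> eg; move: h1 h2; rewrite eg /= => ? ?.
  by move/XnB; rewrite /inBB sc_refl.
have blue : ~~ samecomp ends (gamma :|: al') (ends e).1 (ends e).2.
  apply/negP => c.
  have : samecomp ends gamma (ends e).1 (ends e).2.
    apply: (connect_inv (samecomp ends gamma (ends e).1) c); first exact: sc_refl.
    move=> u w Au /adjP[g]; rewrite inE => /orP[gg|].
      move=> eg; apply: sc_trans Au _; have := sc_edge ends gg.
      by case: eg => -> //=; rewrite sc_sym.
    rewrite inE => /andP[]; rewrite inE => /and3P[gE' gng gnS] nX eg.
    have Xu : X u by apply: Xg.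
    have nBu : ~~ inBB u by apply: XnB.
    case Bw: (inBB w).
      exfalso; move/negP: gnS; apply; rewrite inE; apply/and3P; split => //.
      have Au' : samecomp ends gamma u (ends e).1 by rewrite sc_sym.
      have Bw' : samecomp ends gamma w (ends e).2 by rewrite sc_sym.
      by rewrite /joins_same; case: eg => -> /=; rewrite Au' Bw' ?orbT.
    exfalso; have gF : g \in F0.
      rewrite inE; apply/orP; right; rewrite inE; apply/andP; split; first by rewrite inE gE' gng gnS.
      case: eg => -> /=; by rewrite Bw nBu.
    have Xw : X w.
      apply: (XF0 u) => //; apply/existsP; exists g.
      by rewrite gF; case: eg => ->; rewrite eqxx ?orbT.
    by move: nX; case: eg => -> /=; rewrite Xu Xw.
  by rewrite (negbTE ne12).
have eqS : mmul (mmul (xmon S) (xmon gamma)) (mmul (xmon al) (xmon al'))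
   = xmon (Eef e f).
  apply/ffunP=> g; have gg : (g \in gamma) ==> (g \in Eef e f).
    by apply/implyP => /(subsetP gE).
  move: gg; rewrite !ffunE !inE /smoot !inE.
  case: (g != e); case: (g != f); case: (g \in gamma); case: (joins_same _ _ _ _);
    by case: (X (ends g).1); case: (X (ends g).2).
exists (S, mmul (xmon al) (xmon al')); split.
  split => /=.
  - apply/subsetP=> g; rewrite inE; by case/and3P.
  - rewrite disjoint_subset; apply/subsetP=> g; rewrite !inE; by case/and3P.
  - exists al, al'; split => //; split.
    + apply: compat red; apply/subsetP=> g; rewrite inE; by case/andP.
    + apply: compat blue; apply/subsetP=> g; rewrite inE; by case/andP.
    + have -> : al :&: al' = set0.
        apply/setP=> g; rewrite !inE; by case: (X _ && X _); rewrite ?andbF.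
      apply: compat; first exact: sub0set.
      by rewrite setU0.
  - exact: eqS.
move=> [b m] /= [hb hd [a [a' [[ca ca' caa'] mE]]] heq].
have pt : forall g, (g \in b) + (g \in gamma) + ((g \in a) + (g \in a'))
                    = (g \in Eef e f) :> nat.
  move=> g; have := congr1 (fun h : {ffun E -> nat} => h g) heq; by rewrite mE !ffunE.
have aa0 : a :&: a' = set0.
  apply/setP=> g; rewrite !inE; have := pt g.
  case: (g \in a); case: (g \in a') => //=.
  by case: (g \in b); case: (g \in gamma); case: (g \in Eef e f).
have bS : b = S.
  apply/setP=> g; rewrite inE; apply/idP/idP.
    move=> gb; case/and5P: caa' => _ _ _ _ /forall_inP/(_ g gb).
    by rewrite aa0 setU0.
  case/and3P=> gE' gng js; have := pt g; rewrite gE' (negbTE gng).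
  case gb: (g \in b) => // /= h.
  have : (g \in a) || (g \in a') by move: h; case: (g \in a); case: (g \in a').
  case/orP=> ga; exfalso.
  - case/and5P: ca => _ _ _ /and3P[_ nc _] _; move/negP: nc; apply.
    apply: (joins_edge (g := g)); first by rewrite inE ga orbT.
    by apply: js_mono js; apply: subsetUl.
  - case/and5P: ca' => _ _ _ /and3P[_ nc _] _; move/negP: nc; apply.
    apply: (joins_edge (g := g)); first by rewrite inE ga orbT.
    by apply: js_mono js; apply: subsetUl.
subst b; congr pair; apply/ffunP=> g.
have := congr1 (fun h : {ffun E -> nat} => h g) heq; have := congr1 (fun h : {ffun E -> nat} => h g) eqS.
rewrite !ffunE => h1 h2; apply: (@addnI ((g \in S) + (g \in gamma))).
by rewrite h2 h1.
Qed.
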